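(* Let $G\subset GL(V)$ be a reflection group and fix $g\in G$. If $\ell(a)=\operatorname{codim}(a)$ for every codimension atom $a$ with $a\le_\perp g$, then $\ell(g)=\operatorname{codim}(g)$.
   Context: $V$ is a finite-dimensional vector space of dimension $n$ over $\mathbb{R}$ or $\mathbb{C}$. A reflection is an element of $GL(V)$ of finite order fixing a hyperplane pointwise; a reflection group is a finite subgroup of $GL(V)$ generated by reflections. $\ell(g)$ is the minimal number of reflections of $G$ whose product is $g$ ($\ell(1)=0$). $\operatorname{codim}(g)=n-\dim\{v\in V:gv=v\}$. The codimension order is the partial order on $G$ given by $a\le_\perp c$ iff $\operatorname{codim}(a)+\operatorname{codim}(a^{-1}c)=\operatorname{codim}(c)$. A codimension atom is an element covering the identity in this poset, i.e. $a\ne 1$ such that there is no $x$ with $1<_\perp x<_\perp a$. *)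

(* Defs.v *)
From HB Require Import structures.
From mathcomp Require Import all_boot all_order all_algebra.
From mathcomp Require Import complex.
From mathcomp Require Import reals.
Set Implicit Arguments. Unset Strict Implicit. Unset Printing Implicit Defensive.
Import Order.TTheory GRing.Theory Num.Theory.
Local Open Scope ring_scope.

Section Defs.
Variables (F : fieldType) (n : nat).
Implicit Types (g a c x : 'M[F]_n) (G : seq 'M[F]_n).

(* Matrices act on row vectors v (v *m g); fixed space of g as a row space. *)
Definition fixspace g : 'M[F]_n := kermx (g - 1%:M).

Definition codim g : nat := (n - \rank (fixspace g))%N.

Definition is_reflection g : Prop :=
  [/\ g \in unitmx, (exists k, (0 < k)%N /\ g ^+ k = 1%:M), g != 1%:M &
      exists H : 'M[F]_n, \rank H = n.-1 /\ (H <= fixspace g)%MS].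

Definition mxprod (s : seq 'M[F]_n) : 'M[F]_n := foldr mulmx 1%:M s.

Definition reflection_group G : Prop :=
  [/\ 1%:M \in G,
      (forall g, g \in G -> g \in unitmx),
      (forall g h, g \in G -> h \in G -> g *m h \in G),
      (forall g, g \in G -> invmx g \in G) &
      (forall g, g \in G -> exists s : seq 'M[F]_n,
          (forall r, r \in s -> r \in G /\ is_reflection r) /\ mxprod s = g)].

Definition refl_factorization G g (s : seq 'M[F]_n) : Prop :=
  (forall r, r \in s -> r \in G /\ is_reflection r) /\ mxprod s = g.

Definition is_refl_length G g (k : nat) : Prop :=
  (exists s, refl_factorization G g s /\ size s = k) /\
  (forall s, refl_factorization G g s -> (k <= size s)%N).

Definition codim_le a c : Prop := (codim a + codim (invmx a *m c))%N = codim c.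

Definition codim_lt a c : Prop := codim_le a c /\ a <> c.

Definition codim_atom G a : Prop :=
  a \in G /\ a <> 1%:M /\
  ~ (exists x, x \in G /\ codim_lt 1%:M x /\ codim_lt x a).

End Defs.

Definition main_claim (F : fieldType) : Prop :=
  forall (n : nat) (G : seq 'M[F]_n) (g : 'M[F]_n),
    reflection_group G -> g \in G ->
    (forall a, codim_atom G a -> codim_le a g -> is_refl_length G a (codim a)) ->
    is_refl_length G g (codim g).

(* Main.v *)
Require Import Defs.
From HB Require Import structures.
From mathcomp Require Import all_boot all_order all_algebra.
From mathcomp Require Import complex.
From mathcomp Require Import reals.
From Stdlib Require Import Classical.
Set Implicit Arguments. Unset Strict Implicit. Unset Printing Implicit Defensive.
Import Order.TTheory GRing.Theory Num.Theory.
Local Open Scope ring_scope.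

Section Gen.
Variables (F : fieldType) (n : nat).
Implicit Types (r g a b c x y : 'M[F]_n) (G : seq 'M[F]_n).

Lemma codimE g : codim g = \rank (g - 1%:M).
Proof. by rewrite /codim /fixspace mxrank_ker subKn // rank_leq_row. Qed.

Lemma codimM a b : (codim (a *m b) <= codim a + codim b)%N.
Proof.
rewrite !codimE.
have -> : a *m b - 1%:M = (a - 1%:M) *m b + (b - 1%:M).
  by rewrite mulmxBl mul1mx addrA subrK.
apply: leq_trans (mxrank_add _ _) _.
by rewrite leq_add2r mxrankM_maxl.
Qed.

Lemma codim1 : codim (1%:M : 'M[F]_n) = 0%N.
Proof. by rewrite codimE subrr mxrank0. Qed.

Lemma codim_eq0 a : codim a = 0%N -> a = 1%:M.
Proof. by rewrite codimE => /eqP; rewrite mxrank_eq0 subr_eq0 => /eqP. Qed.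

Lemma rank_unitl (P A : 'M[F]_n) : P \in unitmx -> \rank (P *m A) = \rank A.
Proof.
move=> uP; apply/eqP; rewrite eqn_leq mxrankM_maxr /=.
by rewrite -{1}(mulKmx uP A) mxrankM_maxr.
Qed.

Lemma codim_conj a x : x \in unitmx -> codim (invmx x *m a *m x) = codim a.
Proof.
move=> ux; rewrite !codimE.
have -> : invmx x *m a *m x - 1%:M = invmx x *m (a - 1%:M) *m x.
  by rewrite mulmxBr mulmxBl mulmx1 mulVmx.
by rewrite mxrankMfree ?row_free_unit // rank_unitl // unitmx_inv.
Qed.

Lemma codim_refl r : is_reflection r -> (codim r <= 1)%N.
Proof.
case=> _ _ _ [H [rH sH]].
rewrite /codim; have := mxrankS sH; rewrite rH => le.
apply: leq_trans (leq_sub2l _ le) _; by rewrite leq_subLR addn1 leqSpred.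
Qed.

Lemma mxprod_cat (s1 s2 : seq 'M[F]_n) : mxprod (s1 ++ s2) = mxprod s1 *m mxprod s2.
Proof. by elim: s1 => [|r s IH] /=; rewrite ?mul1mx // IH mulmxA. Qed.

Lemma codim_prod (s : seq 'M[F]_n) : (forall r, r \in s -> is_reflection r) ->
  (codim (mxprod s) <= size s)%N.
Proof.
elim: s => [|r s IH] H /=; first by rewrite codim1.
apply: leq_trans (codimM _ _) _; rewrite -add1n leq_add //.
  by apply: codim_refl; apply: H; rewrite inE eqxx.
by apply: IH => r' h; apply: H; rewrite inE h orbT.
Qed.

Lemma refl_lower G g s : refl_factorization G g s -> (codim g <= size s)%N.
Proof. by case=> H <-; apply: codim_prod => r /H []. Qed.

Lemma codim_le_trans a y x : y \in unitmx -> a \in unitmx ->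
  codim_le a y -> codim_le y x -> codim_le a x.
Proof.
move=> uy ua; rewrite /codim_le => h1 h2; apply/eqP; rewrite eqn_leq.
have e : invmx a *m x = (invmx a *m y) *m (invmx y *m x).
  by rewrite mulmxA -(mulmxA _ y) mulmxV // mulmx1.
apply/andP; split.
  rewrite -h2 -h1 -addnA leq_add2l e; exact: codimM.
by have := codimM a (invmx a *m x); rewrite mulmxA mulmxV // mul1mx.
Qed.

Lemma codim_le_refl x : codim_le x x -> True. Proof. by []. Qed.

Definition groupG G := [/\ 1%:M \in G,
      (forall g, g \in G -> g \in unitmx),
      (forall g h, g \in G -> h \in G -> g *m h \in G) &
      (forall g, g \in G -> invmx g \in G)].

Lemma exists_atom G x : groupG G -> x \in G -> x <> 1%:M ->
  exists a, codim_atom G a /\ codim_le a x.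
Proof.
move=> [G1 GU GM GV].
move: {2}(codim x) (leqnn (codim x)) => k; elim: k x => [|k IH] x.
  by rewrite leqn0 => /eqP /codim_eq0 -> _ [].
move=> lek xG x1.
case: (classic (codim_atom G x)) => [at_x|nat].
  exists x; split => //; rewrite /codim_le mulVmx ?GU // codim1 addn0 //.
have [y [yG [[_ y1] [hyx yx]]]] : exists y, y \in G /\ codim_lt 1%:M y /\ codim_lt y x.
  by apply: NNPP => ne; apply: nat; split => //; split.
have lt : (codim y < codim x)%N.
  move: hyx; rewrite /codim_le => <-; rewrite -{1}[codim y]addn0 ltn_add2l lt0n.
  apply/eqP => /codim_eq0 h; apply: yx.
  by rewrite -[x]mul1mx -(mulmxV (GU _ yG)) -mulmxA h mulmx1.
have [a [aat hay]] := IH y (leq_trans (ltnSE (leq_trans lt lek)) (leqnn k)) yG (nesym y1).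
exists a; split => //; apply: codim_le_trans hay hyx; rewrite GU //.
by case: aat.
Qed.

Lemma invmxM' (A B : 'M[F]_n) : A \in unitmx -> B \in unitmx ->
  invmx (A *m B) = invmx B *m invmx A.
Proof.
move=> uA uB.
have uAB : A *m B \in unitmx by rewrite unitmx_mul uA.
have e : (A *m B) *m (invmx B *m invmx A) = 1%:M.
  by rewrite -mulmxA (mulmxA B) mulmxV // mul1mx mulmxV.
by rewrite -[invmx (A *m B)]mulmx1 -e mulmxA mulVmx // mul1mx.
Qed.

Lemma main_gen G g : reflection_group G -> g \in G ->
  (forall a, codim_atom G a -> codim_le a g -> is_refl_length G a (codim a)) ->
  is_refl_length G g (codim g).
Proof.
move=> RG gG hyp.
have gr : groupG G by case: RG.
case: RG => G1 GU GM GV _.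
suff main : forall x, x \in G -> codim_le x g ->
    exists s, refl_factorization G x s /\ size s = codim x.
  split; last by move=> s; apply: refl_lower.
  apply: main => //; rewrite /codim_le mulVmx ?GU // codim1 addn0 //.
move=> x0; move: {2}(codim x0) (leqnn (codim x0)) => k; elim: k x0 => [|k IH] x.
  rewrite leqn0 => /eqP /[dup] c0 /codim_eq0 -> _ _.
  by exists [::]; rewrite codim1; split => //; split.
move=> lek xG xg.
case: (classic (x = 1%:M)) => [->|x1].
  by exists [::]; rewrite codim1; split => //; split.
have [a [aat ax]] := exists_atom gr xG x1.
have [aG [a1 _]] := aat.
have ua := GU _ aG; have ux := GU _ xG.
have ag : codim_le a g by apply: codim_le_trans ax xg.
have [[s1 [[f1 p1] z1]] _] := hyp a aat ag.
set h := invmx a *m x.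
have hG : h \in G by rewrite /h GM ?GV.
have uh : h \in unitmx by rewrite /h unitmx_mul unitmx_inv ua.
have hx : codim_le h x.
  rewrite /codim_le /h invmxM' ?unitmx_inv // invmxK codim_conj //.
  by move: ax; rewrite /codim_le addnC.
have ca : (0 < codim a)%N by rewrite lt0n; apply/eqP => /codim_eq0.
have lth : (codim h < codim x)%N.
  by move: ax; rewrite /codim_le => <-; rewrite -/h -addn1 addnC leq_add2r.
have [s2 [[f2 p2] z2]] := IH h (ltnSE (leq_trans lth lek)) hG (codim_le_trans ux uh hx xg).
exists (s1 ++ s2); split; first split.
- by move=> r; rewrite mem_cat => /orP [/f1|/f2].
- by rewrite mxprod_cat p1 p2 /h mulmxA mulmxV // mul1mx.
- by rewrite size_cat z1 z2; move: ax; rewrite /codim_le.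
Qed.
End Gen.

Theorem mainTheorem2 (R : realType) : main_claim R /\ main_claim R[i].
Proof. by split => n G g; apply: main_gen. Qed.
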